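(* Let $1\le i\le n-2$, $\pi_1\in\mathfrak S_i(1243,2143,321)$ and $\pi_2\in\mathfrak S_{n-i}(1243,2143,321)$. Then $\pi_1*\pi_2\in\mathfrak S_n(1243,2143,321)$ if and only if all of the following hold: (i) at least one of $\pi_1,\pi_2$ has first entry $1$; (ii) the entries $2,3,\dots,i$ appear in increasing order in $\pi_1$; (iii) the entries $\pi_2(2),\pi_2(3),\dots,\pi_2(n-i)$ are increasing.
   Context: $\mathfrak S_m(R)$ is the set of permutations of $\{1,\dots,m\}$ avoiding every pattern in $R$ (no subsequence with the same relative order as a pattern). For nonempty permutations $\pi_1,\pi_2$: let $\tilde\pi_1$ be obtained by adding $|\pi_2|-1$ to every entry of $\pi_1$ and then replacing the entry equal to $|\pi_2|$ by the first entry of $\pi_2$; let $\tilde\pi_2$ be $\pi_2$ with its first entry deleted; then $\pi_1*\pi_2=\tilde\pi_1,\ N,\ \tilde\pi_2$ (concatenation) where $N=|\pi_1|+|\pi_2|$. E.g. $3124*15342=716895342$. *)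

(* Defs.v *)
(* permutations of {1..m} as sequences of nat (one-line notation). *)
From mathcomp Require Import all_boot.
Set Implicit Arguments. Unset Strict Implicit. Unset Printing Implicit Defensive.

Definition is_perm (m : nat) (p : seq nat) : bool := perm_eq p (iota 1 m).

Definition contains (p q : seq nat) : Prop :=
  exists s : seq nat, [/\ subseq s p, size s = size q &
    forall a b, a < size q -> b < size q -> (nth 0 s a < nth 0 s b) = (nth 0 q a < nth 0 q b)].

Definition avoids (p q : seq nat) : Prop := ~ contains p q.

Definition inS (m : nat) (R : seq (seq nat)) (p : seq nat) : Prop :=
  is_perm m p /\ forall q, q \in R -> avoids p q.

Definition R3 : seq (seq nat) := [:: [:: 1; 2; 4; 3]; [:: 2; 1; 4; 3]; [:: 3; 2; 1]].

Definition star (p1 p2 : seq nat) : seq nat :=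
  let k := size p2 in
  let t1 := map (fun x => if x + (k - 1) == k then head 0 p2 else x + (k - 1)) p1 in
  t1 ++ (size p1 + size p2) :: behead p2.

(* Main.v *)
Require Import Defs.
From mathcomp Require Import all_boot zify.

Lemma sorted_succ (idx : seq nat) : sorted ltn idx -> path ltn 0 (map succn idx).
Proof.
case: idx => //= j idx H.
by rewrite path_map.
Qed.

Lemma subseq_idx (p s : seq nat) : subseq s p ->
  exists idx, [/\ sorted ltn idx, all (fun j => j < size p) idx & s = map (nth 0 p) idx].
Proof.
elim: p s => [|x p IH] [|y s] //=.
- by move=> _; exists [::].
- by move=> _; exists [::].
case: eqP => [->|ne] /IH [idx [H1 H2 H3]].
- exists (0 :: map succn idx); split => //=.
  + exact: sorted_succ.
  + by rewrite all_map; apply: sub_all H2 => j /=.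
  + by rewrite H3 -map_comp.
- exists (map succn idx); split => //=.
  + by have := @sorted_succ _ H1; case: (map succn idx) => //= a l /andP[].
  + by rewrite all_map; apply: sub_all H2 => j /=.
  + by rewrite H3 -map_comp.
Qed.

Lemma idx_subseq_gen (p idx : seq nat) m : path ltn m idx ->
  all (fun j => j < size p) idx ->
  subseq (map (nth 0 p) idx) (drop m.+1 p).
Proof.
elim: idx m => [|j idx IH] m; first by move=> _ _; exact: sub0seq.
move=> /= /andP[Hmj Hp] /andP[Hj Ha].
rewrite -(cat_take_drop (j - m.+1) (drop m.+1 p)) drop_drop.
rewrite (_ : j - m.+1 + m.+1 = j); last lia.
rewrite (drop_nth 0 Hj).
rewrite -[X in subseq X _]cat0s.
apply: cat_subseq; first exact: sub0seq.
by rewrite /= eqxx; apply: IH.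
Qed.

Lemma idx_subseq (p idx : seq nat) : sorted ltn idx -> all (fun j => j < size p) idx ->
  subseq (map (nth 0 p) idx) p.
Proof.
move=> Hs Ha.
have := @idx_subseq_gen (0 :: p) (map succn idx) 0 (sorted_succ _ Hs).
rewrite all_map /= drop0 -map_comp; apply.
by apply: sub_all Ha => j /=.
Qed.

Lemma contains_idx (p q : seq nat) : contains p q ->
  exists idx, [/\ size idx = size q, sorted ltn idx, all (fun j => j < size p) idx &
    forall a b, a < size q -> b < size q ->
      (nth 0 p (nth 0 idx a) < nth 0 p (nth 0 idx b)) = (nth 0 q a < nth 0 q b)].
Proof.
move=> [s [Hsub Hsz Hc]].
have [idx [H1 H2 H3]] := subseq_idx _ _ Hsub.
have Hsi : size idx = size q by rewrite -Hsz H3 size_map.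
exists idx; split => // a b Ha Hb.
rewrite -Hc // H3 !(nth_map 0) //; by rewrite Hsi.
Qed.

Lemma contains321 (p : seq nat) x y z : x < y -> y < z -> z < size p ->
  nth 0 p y < nth 0 p x -> nth 0 p z < nth 0 p y -> contains p [:: 3; 2; 1].
Proof.
move=> Hxy Hyz Hz H1 H2.
exists (map (nth 0 p) [:: x; y; z]); split => //.
  by apply: idx_subseq => /=; rewrite ?andbT; repeat (apply/andP; split); lia.
move=> [|[|[|a]]] [|[|[|b]]] //= _ _; lia.
Qed.

Section Struct.
Variables (p : seq nat) (i k j0 : nat).
Local Notation s j := (nth 0 p j).
Hypotheses (Hj0 : j0 <= i) (Hi : i < size p)
  (HL : forall j, j <= i -> j != j0 -> k < s j)
  (Hs0 : s j0 <= k)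
  (HS : forall j, i < j -> j < size p -> s j <= k)
  (HLinc : forall j j', j < j' -> j' <= i -> j != j0 -> j' != j0 -> s j < s j')
  (HSinc : forall j j', i < j -> j < j' -> j' < size p -> s j < s j')
  (Hform : j0 = 0 \/ forall j, i < j -> j < size p -> s j0 < s j).

Lemma descent x y : x < y -> y < size p -> s y < s x ->
  (x <= i /\ x != j0 /\ (i < y \/ y = j0)) \/ (x = j0 /\ i < y).
Proof.
move=> Hxy Hy Hd.
case: (leqP x i) => Hx; last first.
  by have := HSinc _ _ Hx Hxy Hy; lia.
case: (eqVneq x j0) => Hxj.
  right; split => //. case: (leqP y i) => Hyi //.
  have := HL _ Hyi; rewrite (_ : (y != j0) = true); last (apply/eqP; lia).
  move=> /(_ isT). have := Hs0. rewrite -Hxj. lia.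
left; split => //; split => //.
case: (leqP y i) => Hyi; last by left.
case: (eqVneq y j0) => Hyj; first by right.
by have := HLinc _ _ Hxy Hyi Hxj Hyj; lia.
Qed.

Lemma struct_avoid q : q \in R3 -> avoids p q.
Proof.
move=> Hq; rewrite /avoids => /contains_idx [idx [Hsz Hsort Hall Hc]].
move: Hq; rewrite !inE => /orP[/eqP Hq|/orP[/eqP Hq|/eqP Hq]]; subst q;
  move: Hsz Hsort Hall Hc.
- case: idx => [|x0 [|x1 [|x2 [|x3 [|? ?]]]]] //= _.
  rewrite !andbT => /and3P[H01 H12 H23] /and4P[_ _ _ H3] Hc.
  have C03 := Hc 0 3 isT isT; have C13 := Hc 1 3 isT isT; have C32 := Hc 3 2 isT isT.
  move: C03 C13 C32 => /= C03 C13 C32.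
  have Hx2 : x2 < size p by lia.
  have := descent _ _ H23 H3; rewrite C32 => /(_ isT).
  case=> [[Hx2i [Hx2j [Hy|Hy]]]|[Hx2j Hy]].
  + case: (eqVneq x0 j0) => Hx0.
    * have := HL _ (_ : x1 <= i) (_ : x1 != j0). have := HS _ Hy H3. move: C13. rewrite Hx0 in H01. 
      move=> C13 A B; have := B (ltac:(lia)) (ltac:(apply/eqP; lia)). lia.
    * have := HL _ (_ : x0 <= i) Hx0. have := HS _ Hy H3. move: C03.
      move=> C03 A B; have := B (ltac:(lia)). lia.
  + subst x3. have := HL _ (_ : x0 <= i) (_ : x0 != j0).
    move=> B; have := B (ltac:(lia)) (ltac:(apply/eqP; lia)). lia.
  + subst x2. have := HL _ (_ : x0 <= i) (_ : x0 != j0). have := HS _ Hy H3.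
    move=> A B; have := B (ltac:(lia)) (ltac:(apply/eqP; lia)). lia.
- case: idx => [|x0 [|x1 [|x2 [|x3 [|? ?]]]]] //= _.
  rewrite !andbT => /and3P[H01 H12 H23] /and4P[_ _ _ H3] Hc.
  have C03 := Hc 0 3 isT isT; have C13 := Hc 1 3 isT isT; have C32 := Hc 3 2 isT isT.
  move: C03 C13 C32 => /= C03 C13 C32.
  have Hx2 : x2 < size p by lia.
  have := descent _ _ H23 H3; rewrite C32 => /(_ isT).
  case=> [[Hx2i [Hx2j [Hy|Hy]]]|[Hx2j Hy]].
  + case: (eqVneq x0 j0) => Hx0.
    * have := HL _ (_ : x1 <= i) (_ : x1 != j0). have := HS _ Hy H3. move: C13. rewrite Hx0 in H01. 
      move=> C13 A B; have := B (ltac:(lia)) (ltac:(apply/eqP; lia)). lia.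
    * have := HL _ (_ : x0 <= i) Hx0. have := HS _ Hy H3. move: C03.
      move=> C03 A B; have := B (ltac:(lia)). lia.
  + subst x3. have := HL _ (_ : x0 <= i) (_ : x0 != j0).
    move=> B; have := B (ltac:(lia)) (ltac:(apply/eqP; lia)). lia.
  + subst x2. have := HL _ (_ : x0 <= i) (_ : x0 != j0). have := HS _ Hy H3.
    move=> A B; have := B (ltac:(lia)) (ltac:(apply/eqP; lia)). lia.
- case: idx => [|x0 [|x1 [|x2 [|? ?]]]] //= _.
  rewrite !andbT => /andP[H01 H12] /and3P[_ H1 H2] Hc.
  have C10 := Hc 1 0 isT isT; have C21 := Hc 2 1 isT isT.
  move: C10 C21 => /= C10 C21.
  have := descent _ _ H12 H2; rewrite C21 => /(_ isT).
  have := descent _ _ H01 H1; rewrite C10 => /(_ isT).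
  case=> [[Hx0i [Hx0j [Hy|Hy]]]|[Hx0j Hy]].
  + case=> [[? _]|[? _]]; lia.
  + subst x1. case=> [[_ [/eqP ? _]]|[_ Hy2]]; first done.
    case: Hform => [?|Hf]; first lia.
    have := Hf _ Hy2 H2. lia.
  + case=> [[? _]|[? _]]; lia.
Qed.
End Struct.

Definition fst_map (k c x : nat) := if x + (k - 1) == k then c else x + (k - 1).

Lemma nth_star p1 p2 j : nth 0 (star p1 p2) j =
  if j < size p1 then fst_map (size p2) (head 0 p2) (nth 0 p1 j)
  else if j == size p1 then size p1 + size p2 else nth 0 p2 (j - size p1).
Proof.
rewrite /star nth_cat size_map. case: ltnP => H.
  by rewrite (nth_map 0).
case: eqP => [->|ne]; first by rewrite subnn.
have E : j - size p1 = (j - size p1).-1.+1 by lia.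
by rewrite {1}E /= nth_behead -E.
Qed.

Lemma size_star p1 p2 : 0 < size p2 -> size (star p1 p2) = size p1 + size p2.
Proof.
rewrite /star size_cat size_map /= size_behead.
case: p2 => [|x l] //= _; lia.
Qed.

Lemma perm_star p1 p2 i k : 1 <= i -> 1 <= k -> is_perm i p1 -> is_perm k p2 ->
  is_perm (i + k) (star p1 p2).
Proof.
rewrite /is_perm => Hi Hk P1 P2.
have S2 : size p2 = k by rewrite (perm_size P2) size_iota.
case: p2 P2 S2 => [|c b] P2 S2; first by rewrite -S2 in Hk.
move: S2 => /= S2; subst k.
rewrite /star /=.
set f := (fun x => _).
have E : map f (iota 1 i) = c :: iota (size b).+2 (i - 1).
  rewrite (_ : i = (i - 1).+1); last lia.
  rewrite /= {1}/f /= (_ : 1 + ((size b).+1 - 1) == (size b).+1); last by apply/eqP; lia.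
  congr (_ :: _).
  rewrite (_ : (size b).+2 = size b + 2); last lia.
  rewrite subn1 iotaDl subn1 /=. apply/eq_in_map => x; rewrite mem_iota /f => Hx /=.
  rewrite subn1 /=.
  case: eqP => H; lia.
apply: (perm_trans (perm_cat (perm_map f P1) (perm_refl _))).
rewrite E.
rewrite (_ : i + (size b).+1 = (size b).+1 + (i - 1) + 1); last lia.
rewrite iotaD iotaD.
rewrite (_ : size p1 + (size b).+1 = 1 + ((size b).+1 + (i - 1))); last first.
  rewrite (perm_size P1) size_iota /=; lia.
apply: (@perm_trans _ ((c :: b) ++ iota (size b).+2 (i - 1) ++ [:: 1 + ((size b).+1 + (i - 1))])).
  by apply/permP => P; rewrite /= !count_cat /=; lia.
rewrite -catA; apply: perm_cat => //.
Qed.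

Theorem mainTheorem13 (n i : nat) (p1 p2 : seq nat) :
  1 <= i -> i <= n - 2 ->
  inS i R3 p1 -> inS (n - i) R3 p2 ->
  (inS n R3 (star p1 p2) <->
     [/\ head 0 p1 = 1 \/ head 0 p2 = 1,
         (forall a b, 2 <= a -> a < b -> b <= i -> index a p1 < index b p1) &
         sorted ltn (behead p2)]).
Proof.
move=> Hi1 Hin [P1 _] [P2 _].
set k := n - i in P2.
have Sz1 : size p1 = i by rewrite (perm_size P1) size_iota.
have Sz2 : size p2 = k by rewrite (perm_size P2) size_iota.
have Hk : 2 <= k by rewrite /k; lia.
have Hn : n = i + k by rewrite /k; lia.
have U1 : uniq p1 by rewrite (perm_uniq P1) iota_uniq.
have U2 : uniq p2 by rewrite (perm_uniq P2) iota_uniq.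
have M1 x : (x \in p1) = (1 <= x <= i).
  by rewrite (perm_mem P1) mem_iota; apply/idP/idP; lia.
have M2 x : (x \in p2) = (1 <= x <= k).
  by rewrite (perm_mem P2) mem_iota; apply/idP/idP; lia.
have N1 j : j < i -> 1 <= nth 0 p1 j <= i.
  by move=> Hj; rewrite -M1 mem_nth // Sz1.
have N2 j : j < k -> 1 <= nth 0 p2 j <= k.
  by move=> Hj; rewrite -M2 mem_nth // Sz2.
set c := head 0 p2.
have Hc : c = nth 0 p2 0 by rewrite /c; case: (p2).
have Hc1 : 1 <= c <= k by rewrite Hc; apply: N2; lia.
have FM1 : fst_map k c 1 = c by rewrite /fst_map (_ : 1 + (k - 1) == k) //; apply/eqP; lia.
have FM2 x : 2 <= x -> fst_map k c x = x + (k - 1).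
  by move=> Hx; rewrite /fst_map; case: eqP => //; lia.
set s := star p1 p2.
have F j : nth 0 s j = if j < i then fst_map k c (nth 0 p1 j)
                       else if j == i then n else nth 0 p2 (j - i).
  by rewrite /s nth_star Sz1 Sz2 Hn.
have Ss : size s = n by rewrite /s size_star ?Sz1 ?Sz2 //; lia.
set j0 := index 1 p1.
have Hj0 : j0 < i by rewrite -Sz1 index_mem M1; lia.
have Hj0v : nth 0 p1 j0 = 1 by rewrite nth_index // M1; lia.
have Hne1 j : j < i -> j != j0 -> 2 <= nth 0 p1 j.
  move=> Hj Hjj. have := N1 _ Hj. case: (eqVneq (nth 0 p1 j) 1) => [E|]; last lia.
  by move: Hjj; rewrite /j0 -E index_uniq ?Sz1 // eqxx.
have IDX j : j < i -> index (nth 0 p1 j) p1 = j by move=> Hj; rewrite index_uniq ?Sz1.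
split.
- move=> [_ Hav].
  have H321 : ~ contains s [:: 3; 2; 1] by apply: Hav; rewrite !inE eqxx !orbT.
  split.
  + case: (eqVneq (head 0 p1) 1) => h1; first by left.
    case: (eqVneq c 1) => h2; first by right.
    exfalso; apply: H321.
    have Hp10 : head 0 p1 = nth 0 p1 0 by case: (p1).
    have Hj0pos : 0 < j0.
      rewrite lt0n; apply/eqP => E; move: Hj0v; rewrite E -Hp10 => H; by rewrite H eqxx in h1.
    have H1in : 1 \in p2 by rewrite M2; lia.
    set z := index 1 p2.
    have Hz : z < k by rewrite -Sz2 index_mem.
    have Hzv : nth 0 p2 z = 1 by rewrite nth_index.
    have Hzpos : 0 < z.
      rewrite lt0n; apply/eqP => E; move: Hzv; rewrite E -Hc => H; by rewrite H eqxx in h2.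
    apply: (@contains321 s 0 j0 (i + z)); try lia.
    + rewrite !F Hj0 (_ : 0 < i) // Hj0v FM1 FM2; last by apply: Hne1; lia.
      have := N1 0 (ltac:(lia)). lia.
    + rewrite !F Hj0 Hj0v FM1 (_ : i + z < i = false); last lia.
      rewrite (_ : i + z == i = false); last lia.
      rewrite (_ : i + z - i = z); last lia. lia.
  + move=> a b Ha Hab Hb. rewrite ltnNge; apply/negP => Hle.
    have Ain : a \in p1 by rewrite M1; lia.
    have Bin : b \in p1 by rewrite M1; lia.
    have Hia : index a p1 < i by rewrite -Sz1 index_mem.
    have Hib : index b p1 < i by rewrite -Sz1 index_mem.
    have Hne : index b p1 != index a p1.
      apply/negP => /eqP E. have := nth_index 0 Ain. rewrite -E nth_index //. lia.
    apply: H321.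
    apply: (@contains321 s (index b p1) (index a p1) (i + 1)); try lia.
    + rewrite !F Hia Hib !nth_index // !FM2; lia.
    + rewrite !F Hia nth_index // (_ : i + 1 < i = false); last lia.
      rewrite (_ : i + 1 == i = false); last lia.
      rewrite (_ : i + 1 - i = 1); last lia. rewrite FM2 //.
      have := N2 1 (ltac:(lia)). lia.
  + apply/(sortedP 0) => m Hm. rewrite !nth_behead.
    rewrite size_behead Sz2 in Hm.
    suff : nth 0 p2 m.+1 < nth 0 p2 m.+2 by [].
    rewrite ltnNge; apply/negP => Hle.
    have Hne : nth 0 p2 m.+1 != nth 0 p2 m.+2 by rewrite nth_uniq ?Sz2; lia.
    apply: H321.
    apply: (@contains321 s i (i + m.+1) (i + m.+2)); try lia.
    + rewrite !F ltnn eqxx (_ : i + m.+1 < i = false); last lia.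
      rewrite (_ : i + m.+1 == i = false); last lia.
      rewrite (_ : i + m.+1 - i = m.+1); last lia.
      have := N2 m.+1 (ltac:(lia)). lia.
    + rewrite !F (_ : i + m.+1 < i = false); last lia.
      rewrite (_ : i + m.+1 == i = false); last lia.
      rewrite (_ : i + m.+1 - i = m.+1); last lia.
      rewrite (_ : i + m.+2 < i = false); last lia.
      rewrite (_ : i + m.+2 == i = false); last lia.
      rewrite (_ : i + m.+2 - i = m.+2); last lia.
      lia.
- move=> [Hh Hii Hiii]. split.
    by rewrite Hn; apply: perm_star => //; lia.
  apply: (@struct_avoid s i k j0); first lia; first lia.
  + move=> j Hj Hjj. rewrite F. case: (ltnP j i) => Hji.
      rewrite FM2; last exact: Hne1. have := Hne1 j Hji Hjj. lia.
    rewrite (_ : j == i); last (apply/eqP; lia). lia.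
  + by rewrite F Hj0 Hj0v FM1; lia.
  + move=> j Hj Hjs. rewrite F (_ : j < i = false); last lia.
    rewrite (_ : j == i = false); last lia.
    have := N2 (j - i) (ltac:(lia)). lia.
  + move=> j j' Hjj' Hj' Hj Hj'0. rewrite !F (_ : j < i); last lia.
    rewrite FM2; last (apply: Hne1 => //; lia).
    case: (ltnP j' i) => Hj'i; last first.
      rewrite (_ : j' == i); last (apply/eqP; lia). have := N1 j (ltac:(lia)). lia.
    rewrite FM2; last exact: Hne1.
    rewrite ltn_add2r ltnNge; apply/negP => Hle.
    have Hne : nth 0 p1 j != nth 0 p1 j' by rewrite nth_uniq ?Sz1; lia.
    have := Hii (nth 0 p1 j') (nth 0 p1 j) (Hne1 _ Hj'i Hj'0) (ltac:(lia)).
    have := N1 j (ltac:(lia)).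
    rewrite !IDX //; lia.
  + move=> j j' Hj Hjj' Hj's. rewrite !F.
    rewrite (_ : j < i = false); last lia.
    rewrite (_ : j == i = false); last lia.
    rewrite (_ : j' < i = false); last lia.
    rewrite (_ : j' == i = false); last lia.
    have := @sorted_ltn_nth _ ltn ltn_trans 0 _ Hiii (j - i - 1) (j' - i - 1).
    rewrite !inE size_behead Sz2 !nth_behead.
    rewrite (_ : (j - i - 1).+1 = j - i); last lia.
    rewrite (_ : (j' - i - 1).+1 = j' - i); last lia.
    apply; lia.
  + case: Hh => Hh; [left|right].
      rewrite /j0. case: (p1) Hh => //= x l ->. by rewrite eqxx.
    move=> j Hj Hjs. rewrite !F Hj0 Hj0v FM1.
    rewrite (_ : j < i = false); last lia.
    rewrite (_ : j == i = false); last lia.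
    have Hne : nth 0 p2 0 != nth 0 p2 (j - i) by rewrite nth_uniq ?Sz2; lia.
    have := N2 (j - i) (ltac:(lia)). move: Hne. rewrite -Hc. rewrite Hh. lia.
Qed.
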